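(* Let $r\ge1$, let $x$ be a positive integer and let $\{(X_t,Y_t)\}_{t\ge 0}$ be the CA competition process with fitness ratio $r$ started at $(x,x)$. Let $\tau_2=\inf\{t\ge 1: X_t=Y_t\}$ be the time of the second tie (the first tie being at time $0$). Then \[ \mathbb{P}[\tau_2<\infty]\le\frac{2}{r+1}. \]
   Context: The CA competition process with fitness ratio $r\ge 1$ started at $(x_0,y_0)$ is the discrete-time Markov chain $\{(X_t,Y_t)\}_{t\ge0}$ on $\{(x,y)\in\mathbb{Z}^2: x\ge1,y\ge1\}$ with $(X_0,Y_0)=(x_0,y_0)$ and transition probabilities: from $(x,y)$ it moves to $(x+1,y)$ with probability $\frac{rx}{rx+y}$ and to $(x,y+1)$ with probability $\frac{y}{rx+y}$. $\inf\emptyset=\infty$. *)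

(* Defs.v *)
From Stdlib Require Import Reals Lra Lia.
From Coquelicot Require Import Coquelicot.
Open Scope R_scope.

Definition pX (r : R) (x y : nat) : R := r * INR x / (r * INR x + INR y).
Definition pY (r : R) (x y : nat) : R := INR y / (r * INR x + INR y).

(* tie_within r n x y = P_(x,y)[ exists t in {1,...,n}, X_t = Y_t ],
   computed by first-step analysis on the path measure of the chain. *)
Fixpoint tie_within (r : R) (n x y : nat) : R :=
  match n with
  | O => 0
  | S m =>
      pX r x y * (if Nat.eqb (S x) y then 1 else tie_within r m (S x) y)
    + pY r x y * (if Nat.eqb x (S y) then 1 else tie_within r m x (S y))
  end.

(* P_(x,y)[ tau_2 < oo ] with tau_2 = inf { t >= 1 : X_t = Y_t }:
   the increasing limit (= supremum) of P[tau_2 <= n]. *)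
Definition prob_tau2_finite (r : R) (x y : nat) : Rbar :=
  Sup_seq (fun n => tie_within r n x y).

(* Main.v *)
Require Import Defs.
From Stdlib Require Import Reals Lra Lia.
From Coquelicot Require Import Coquelicot.
Open Scope R_scope.

Lemma p_nonneg r x y : 1 <= r -> 0 <= pX r x y /\ 0 <= pY r x y.
Proof.
  intros hr. unfold pX, pY.
  assert (hx := pos_INR x). assert (hy := pos_INR y).
  destruct (Req_dec (r * INR x + INR y) 0) as [E|E].
  - unfold Rdiv. rewrite E, Rinv_0. rewrite !Rmult_0_r. lra.
  - assert (0 < r * INR x + INR y) by nra.
    split; apply Rmult_le_pos; try apply Rlt_le, Rinv_0_lt_compat; nra.
Qed.

Lemma p_sum_le r x y : 1 <= r -> pX r x y + pY r x y <= 1.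
Proof.
  intros hr. unfold pX, pY.
  assert (hx := pos_INR x). assert (hy := pos_INR y).
  destruct (Req_dec (r * INR x + INR y) 0) as [E|E].
  - unfold Rdiv. rewrite E, Rinv_0. rewrite !Rmult_0_r. lra.
  - replace (r * INR x / (r * INR x + INR y) + INR y / (r * INR x + INR y)) with 1
      by (field; auto). lra.
Qed.

Lemma tie_S r n x y : tie_within r (S n) x y =
      pX r x y * (if Nat.eqb (S x) y then 1 else tie_within r n (S x) y)
    + pY r x y * (if Nat.eqb x (S y) then 1 else tie_within r n x (S y)).
Proof. reflexivity. Qed.

Lemma tie_le1 r n : 1 <= r -> forall x y, tie_within r n x y <= 1.
Proof.
  intros hr. induction n as [|n IH]; intros x y; simpl.
  - lra.
  - destruct (p_nonneg r x y hr) as [h1 h2]. assert (h3 := p_sum_le r x y hr).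
    assert (A : (if Nat.eqb (S x) y then 1 else tie_within r n (S x) y) <= 1)
      by (destruct (Nat.eqb (S x) y); [lra | apply IH]).
    assert (B : (if Nat.eqb x (S y) then 1 else tie_within r n x (S y)) <= 1)
      by (destruct (Nat.eqb x (S y)); [lra | apply IH]).
    apply Rle_trans with (pX r x y * 1 + pY r x y * 1); [|lra].
    apply Rplus_le_compat; apply Rmult_le_compat_l; auto.
Qed.

Lemma key_ineq r a b : 1 <= r -> b + 1 <= a -> 0 <= b ->
  r * a / (r * a + b) * (/ r * / r) + b / (r * a + b) <= / r.
Proof.
  intros hr hab hb.
  assert (D : 0 < r * a + b) by nra.
  replace (r * a / (r * a + b) * (/ r * / r) + b / (r * a + b))
    with ((a + r * b) / (r * (r * a + b))) by (field; lra).
  apply Rmult_le_reg_l with (r * (r * a + b)). nra.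
  field_simplify; try lra. nra.
Qed.

Lemma tie_far r n : 1 <= r -> forall k b,
  tie_within r n (b + S k) b <= (/ r) ^ (S k).
Proof.
  intros hr. assert (hq : 0 < / r) by (apply Rinv_0_lt_compat; lra).
  induction n as [|n IH]; intros k b; [simpl tie_within | rewrite tie_S].
  - apply Rlt_le, pow_lt; lra.
  - destruct (p_nonneg r (b + S k) b hr) as [h1 h2].
    assert (E1 : Nat.eqb (S (b + S k)) b = false) by (apply Nat.eqb_neq; lia).
    rewrite E1.
    replace (S (b + S k)) with (b + S (S k))%nat by lia.
    assert (T1 := IH (S k) b).
    assert (T2 : (if Nat.eqb (b + S k) (S b) then 1 else tie_within r n (b + S k) (S b))
                 <= (/ r) ^ k).
    { destruct (Nat.eqb (b + S k) (S b)) eqn:E.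
      - apply Nat.eqb_eq in E. assert (k = 0%nat) by lia. subst. simpl. lra.
      - apply Nat.eqb_neq in E. destruct k as [|k]; [lia|].
        replace (b + S (S k))%nat with (S b + S k)%nat by lia. apply IH. }
    apply Rle_trans with (pX r (b + S k) b * (/ r) ^ (S (S k)) + pY r (b + S k) b * (/ r) ^ k).
    { apply Rplus_le_compat; apply Rmult_le_compat_l; auto. }
    assert (K := key_ineq r (INR (b + S k)) (INR b) hr).
    rewrite plus_INR, S_INR in K.
    assert (hb := pos_INR b). assert (hk := pos_INR k).
    specialize (K ltac:(lra) hb). rewrite <- S_INR, <- plus_INR in K.
    unfold pX, pY.
    replace ((/ r) ^ S (S k)) with ((/ r) ^ k * (/ r * / r)) by (simpl; ring).
    replace ((/ r) ^ S k) with ((/ r) ^ k * / r) by (simpl; ring).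
    assert (hp : 0 < (/ r) ^ k) by (apply pow_lt; lra).
    nra.
Qed.

Lemma tie_diag r n x : 1 <= r -> (1 <= x)%nat -> tie_within r n x x <= 2 / (r + 1).
Proof.
  intros hr hx. destruct n as [|n]; [simpl tie_within | rewrite tie_S].
  - apply Rlt_le, Rdiv_lt_0_compat; lra.
  - assert (E1 : Nat.eqb (S x) x = false) by (apply Nat.eqb_neq; lia).
    assert (E2 : Nat.eqb x (S x) = false) by (apply Nat.eqb_neq; lia).
    rewrite E1, E2.
    assert (T1 := tie_far r n hr 0 x). replace (x + 1)%nat with (S x) in T1 by lia.
    assert (T2 := tie_le1 r n hr x (S x)).
    assert (hX : 1 <= INR x) by (apply (le_INR 1); auto).
    assert (pX r x x = r / (r + 1)) by (unfold pX; field; nra).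
    assert (pY r x x = 1 / (r + 1)) by (unfold pY; field; nra).
    destruct (p_nonneg r x x hr) as [h1 h2].
    apply Rle_trans with (pX r x x * (/ r) ^ 1 + pY r x x * 1).
    { apply Rplus_le_compat; apply Rmult_le_compat_l; auto. }
    rewrite H, H0. simpl. right. field. lra.
Qed.

Theorem corollary1 (r : R) (x : nat) (hr : 1 <= r) (hx : (1 <= x)%nat) :
  Rbar_le (prob_tau2_finite r x x) (Finite (2 / (r + 1))).
Proof.
  unfold prob_tau2_finite.
  replace (Finite (2 / (r + 1))) with (Sup_seq (fun _ : nat => Finite (2 / (r + 1)))).
  - apply Sup_seq_le. intros n. simpl. apply tie_diag; auto.
  - apply is_sup_seq_unique. intros eps. split.
    + intros n. simpl. destruct eps; simpl; lra.
    + exists 0%nat. simpl. destruct eps; simpl; lra.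
Qed.
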